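(* For any integers $n \geq 3$ and $m \geq 1$, $\chi_\rho(FSSD_m(K_n)) = n+1$.
   Context: All graphs are finite and simple. For a positive integer $i$, an $i$-packing in a graph $G$ is a set of vertices any two distinct members of which are at distance greater than $i$. The packing chromatic number $\chi_\rho(G)$ is the smallest integer $k$ such that $V(G)$ can be partitioned into sets $V_1,\dots,V_k$ with each $V_i$ an $i$-packing. For a positive integer $m$, $FSSD_m(G)$ is obtained from $G$ by replacing each edge $uv$ of $G$ by a copy of $K_{2,m}$: the edge $uv$ is deleted and $m$ new vertices are added, each adjacent to exactly $u$ and $v$. $K_n$ is the complete graph on $n$ vertices. *)

(* Defs.v *)
From mathcomp Require Import all_boot.
Set Implicit Arguments. Unset Strict Implicit. Unset Printing Implicit Defensive.

(* A simple graph on a finite vertex type T is given by an adjacency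
   relation e : rel T (symmetric, irreflexive). *)

Definition dist_le (T : finType) (e : rel T) (i : nat) (x y : T) : Prop :=
  exists s : seq T, [/\ size s <= i, path e x s & last x s = y].

Definition is_packing (T : finType) (e : rel T) (i : nat) (S : {set T}) : Prop :=
  forall x y, x \in S -> y \in S -> x != y -> ~ dist_le e i x y.

(* V(G) partitioned into V_1, ..., V_k with V_i an i-packing; the class
   V_(j+1) is encoded as the fibre of c over j : 'I_k. *)
Definition packing_colorable (T : finType) (e : rel T) (k : nat) : Prop :=
  exists c : T -> 'I_k, forall j : 'I_k, is_packing e j.+1 [set x | c x == j].

Definition packing_chromatic_number_is (T : finType) (e : rel T) (r : nat) : Prop :=
  packing_colorable e r /\ forall k, packing_colorable e k -> r <= k.

Definition K (n : nat) : rel 'I_n := fun x y => x != y.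
Arguments K n : clear implicits.

Definition is_edge_set (T : finType) (e : rel T) (S : {set T}) : bool :=
  [exists u, exists v, e u v && (S == [set u; v])].

(* vertices of FSSD_m(G): old vertices, plus m new vertices per edge uv *)
Notation fssd_V T e m :=
  (T + {p : {set T} * 'I_m | is_edge_set e p.1})%type.

Definition fssd (T : finType) (e : rel T) (m : nat) : rel (fssd_V T e m) :=
  fun a b => match a, b with
             | inl u, inr w => u \in (val w).1
             | inr w, inl u => u \in (val w).1
             | _, _ => false
             end.
Arguments fssd {T} e m.

(* Main.v *)
Require Import Defs.
From mathcomp Require Import all_boot zify.
Set Implicit Arguments. Unset Strict Implicit.

Lemma edgeP (n m : nat) (u x : 'I_n) : u != x ->
  is_edge_set (K n) ([set u; x], (ord0 : 'I_m.+1)).1.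
Proof. move=> ux; apply/existsP; exists u; apply/existsP; exists x; by rewrite /K ux eqxx. Qed.

Definition nv (n m : nat) (u x : 'I_n) : fssd_V 'I_n (K n) m.+1 :=
  if (insub ([set u; x], (ord0 : 'I_m.+1)) :
        option {p : {set 'I_n} * 'I_m.+1 | is_edge_set (K n) p.1}) is Some w
  then inr w else inl u.

Lemma nvE n m (u x : 'I_n) (ux : u != x) :
  nv m u x = inr (exist _ ([set u; x], ord0) (edgeP m ux)).
Proof.
rewrite /nv; case: insubP => [w hw E | ]; last by rewrite (edgeP m ux).
congr inr; apply: val_inj; by rewrite /= E.
Qed.

Lemma nv_uu n m (u : 'I_n) : nv m u u = inl u.
Proof.
rewrite /nv insubF //=; apply/negbTE/existsP => -[a /existsP [b /andP [ab /eqP E]]].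
have hb : b \in [set u; u] by rewrite E !inE eqxx orbT.
have ha : a \in [set u; u] by rewrite E !inE eqxx.
move: ha hb ab; rewrite !inE !orbb => /eqP -> /eqP ->.
by rewrite /K eqxx.
Qed.

Lemma nvC n m (u x : 'I_n) : nv m u x = nv m x u.
Proof.
case: (u =P x) => [->//|/eqP ux].
have xu : x != u by rewrite eq_sym.
rewrite (nvE m ux) (nvE m xu).
congr inr; apply: val_inj; by rewrite /= setUC.
Qed.

Lemma adjL n m (u x v : 'I_n) : u != x -> fssd (K n) m.+1 (inl v) (nv m u x) = (v \in [set u; x]).
Proof. by move=> ux; rewrite nvE. Qed.

Lemma adjR n m (u x v : 'I_n) : u != x -> fssd (K n) m.+1 (nv m u x) (inl v) = (v \in [set u; x]).
Proof. by move=> ux; rewrite nvE. Qed.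

Lemma inl_nv n m (u x v : 'I_n) : u != x -> (inl v != nv m u x).
Proof. by move=> ux; rewrite nvE. Qed.

Lemma conflict (T : finType) (e : rel T) k (c : T -> 'I_k)
  (H : forall j : 'I_k, is_packing e j.+1 [set x | c x == j]) a b s :
  c a = c b -> a != b -> size s <= (c a).+1 -> path e a s -> last a s = b -> False.
Proof.
move=> eab nab hs hp hl.
apply: (H (c a) a b) => //; first by rewrite inE.
  by rewrite inE eab.
by exists s.
Qed.
Lemma upper n m : packing_colorable (fssd (K n) m) n.+1.
Proof.
exists (fun v => match v with inl u => lift ord0 u | inr _ => ord0 end).
move=> j [u|w] [v|w']; rewrite !inE.
- move=> /eqP hu /eqP hv; rewrite -hv in hu; move/lift_inj: hu => ->.
  by rewrite eqxx.
- move=> /eqP hu /eqP hv; rewrite -hv in hu.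
  by have := neq_lift ord0 u; rewrite hu eqxx.
- move=> /eqP hu /eqP hv; rewrite -hu in hv.
  by have := neq_lift ord0 v; rewrite hv eqxx.
- move=> /eqP hu /eqP hv ne [s [hs hp hl]]; rewrite -hu /= in hs.
  case: s hs hp hl => [|b [|b' s]] //=.
    by move=> _ _ E; rewrite E eqxx in ne.
  by rewrite andbT => _ hp E; rewrite E in hp.
Qed.
Arguments fssd {T} e m _ _ : simpl never.
Lemma nv_neq n m (u x u' x' v : 'I_n) : u != x -> u' != x' ->
  v \in [set u; x] -> v \notin [set u'; x'] -> nv m u x != nv m u' x'.
Proof.
move=> h1 h2 i1 i2; apply/eqP => E.
have := adjL m v h1; rewrite E adjL // i1 => /esym.
by rewrite (negbTE i2).
Qed.

Lemma lower n m k (c : fssd_V 'I_n (K n) m.+1 -> 'I_k)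
  (H : forall j : 'I_k, is_packing (fssd (K n) m.+1) j.+1 [set x | c x == j]) :
  3 <= n -> n < k.
Proof.
move=> n3.
have n0 : 0 < n by lia.
have k0 : 0 < k by case: (c (inl (Ordinal n0))) => j hj; lia.
have inlne : forall u v : 'I_n, u != v -> (inl u : fssd_V 'I_n (K n) m.+1) != inl v.
  by move=> u v uv; apply/eqP => -[] /eqP; rewrite (negbTE uv).
have key : forall u, (c (inl u) : nat) = 0 ->
   (forall x, u != x -> (c (nv m u x) : nat) != 0) /\ injective (fun x => c (nv m u x)).
  move=> u hu.
  have nz : forall x, u != x -> (c (nv m u x) : nat) != 0.
    move=> x ux; apply/eqP => hx.
    have E : c (inl u) = c (nv m u x) by apply: val_inj; rewrite /= hu hx.
    apply: (conflict H E (s := [:: nv m u x])) => //=; first exact: inl_nv.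
    by rewrite adjL // !inE eqxx.
  split => // x y /= E; apply/eqP/negPn/negP => xy.
  case: (u =P x) => [ux|/eqP ux].
    subst u; rewrite nv_uu in E.
    have yx : x != y by [].
    by move: (nz y yx); rewrite -E hu.
  case: (u =P y) => [uy|/eqP uy].
    subst u; rewrite nv_uu in E.
    by move: (nz x ux); rewrite E hu.
  apply: (conflict H E (s := [:: inl u; nv m u y])) => //=.
  - apply: (@nv_neq _ m _ _ _ _ x) => //; first by rewrite !inE eqxx orbT.
    by rewrite !inE negb_or (negbTE xy) (eq_sym x u) ux.
  - by have := nz x ux; case: (c (nv m u x)) => -[].
  - by rewrite adjR // adjL // !inE eqxx.
case: (boolP [exists u, (c (inl u) : nat) == 0]) => [/existsP [u /eqP hu] | hno].
  have [nz inj] := key u hu.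
  have := leq_card _ inj; rewrite !card_ord => nk.
  rewrite ltn_neqAle nk andbT; apply/eqP => nk'.
  have surj : forall w : 'I_n, (c (inl w) : nat) = 0 -> forall j : 'I_k, exists x, c (nv m w x) = j.
    move=> w hw j; have [_ injw] := key w hw.
    have cr : #|'I_k| <= #|'I_n| by rewrite !card_ord nk'.
    by have /codomP [x ->] := inj_card_onto injw cr j; exists x.
  have k3 : 3 <= k by lia.
  have k1 : 1 < k by lia.
  have kp : k.-1 < k by lia.
  have [x hx] := surj u hu (Ordinal k1).
  have ux : u != x.
    by apply/eqP => E; move: hx; rewrite -E nv_uu => /(congr1 val) /=; rewrite hu.
  have hx0 : (c (inl x) : nat) = 0.
    apply/eqP/negPn/negP => hnz.
    have [y hy] := surj u hu (c (inl x)).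
    case: (y =P x) => [yx|/eqP yx].
      subst y.
      apply: (conflict H (esym hy) (s := [:: nv m u x])) => //=; first exact: inl_nv.
      by rewrite adjL // !inE eqxx orbT.
    have uy : u != y.
      by apply/eqP => E; move: hy; rewrite -E nv_uu => /(congr1 val) /=; rewrite hu; apply/eqP; rewrite eq_sym.
    have n1 : (c (inl x) : nat) != 1.
      apply/eqP => h1; have : c (nv m u y) = c (nv m u x).
        by apply: val_inj; rewrite hy hx /= h1.
      by move/inj => E; rewrite E eqxx in yx.
    apply: (conflict H (esym hy) (s := [:: nv m u x; inl u; nv m u y])) => //=.
    - exact: inl_nv.
    - by move: hnz n1; case: (c (inl x)) => -[|[|j]].
    - by rewrite adjL // adjR // adjL // !inE !eqxx orbT.
  have [nzx injx] := key x hx0.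
  have [y hy] := surj x hx0 (Ordinal kp).
  have [z hz] := surj u hu (Ordinal kp).
  have xy : x != y.
    by apply/eqP => E; move: hy; rewrite -E nv_uu => /(congr1 val) /=; rewrite hx0; lia.
  have uz : u != z.
    by apply/eqP => E; move: hz; rewrite -E nv_uu => /(congr1 val) /=; rewrite hu; lia.
  have yu : y != u.
    by apply/eqP => E; move: hy; rewrite E nvC hx => /(congr1 val) /=; lia.
  have zx : z != x.
    by apply/eqP => E; move: hz; rewrite E hx => /(congr1 val) /=; lia.
  have xu : x != u by rewrite eq_sym.
  have uy : u != y by rewrite eq_sym.
  have E : c (nv m x y) = c (nv m u z) by rewrite hy hz.
  case: (y =P z) => [yz|/eqP yz].
    subst z.
    apply: (conflict H E (s := [:: inl y; nv m u y])) => //=.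
    - apply: (@nv_neq _ m _ _ _ _ x) => //; first by rewrite !inE eqxx.
      by rewrite !inE negb_or xu (negbTE xy).
    - by rewrite hy /=; lia.
    - by rewrite adjR // adjL // !inE !eqxx !orbT.
  have k4 : 4 <= k.
    move: xy uz yu zx xu yz; rewrite -!(inj_eq val_inj) /= => /eqP ? /eqP ? /eqP ? /eqP ? /eqP ? /eqP ?.
    have := ltn_ord x; have := ltn_ord y; have := ltn_ord z; have := ltn_ord u; lia.
  apply: (conflict H E (s := [:: inl x; nv m x u; inl u; nv m u z])) => //=.
  - apply: (@nv_neq _ m _ _ _ _ y) => //; first by rewrite !inE eqxx orbT.
    by rewrite !inE negb_or yu yz.
  - by rewrite hy /=; lia.
  - by rewrite adjR // adjL // adjR // adjL // !inE !eqxx !orbT ?andbT.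
pose h (o : option 'I_n) := if o is Some x then c (inl x) else Ordinal k0.
have hinj : injective h.
  move=> [x|] [y|] //= E.
  - congr Some; apply/eqP/negPn/negP => xy.
    have hx : (c (inl x) : nat) != 0 by apply: contra hno => hx; apply/existsP; exists x.
    apply: (conflict H E (s := [:: nv m x y; inl y])) => //=.
    + by move: hx; case: (c (inl x)) => -[].
    + by rewrite adjL // adjR // !inE !eqxx orbT.
  - by move: hno; rewrite negb_exists => /forallP /(_ x); rewrite E.
  - by move: hno; rewrite negb_exists => /forallP /(_ y); rewrite -E.
have := leq_card _ hinj; by rewrite card_option !card_ord.
Qed.

Unset Implicit Arguments.

Theorem corollary1 (n m : nat) :
  3 <= n -> 1 <= m -> packing_chromatic_number_is (fssd (K n) m) n.+1.
Proof.
move=> n3; case: m => [//|m] _; split; first exact: upper.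
move=> k [c H]; exact: (lower H n3).
Qed.
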